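(* Let $(\mathcal{X},\|\cdot\|,\mu_\mathcal{X})$ be a regular Euclidean metric measure space, $m\in(0,1]$, and \[\Psi(x_1,x_2)=\|x_1-x_2\|^2\wedge F_{x_2}^{-1}(m)-E_{Z}\big[\|Z-x_2\|^2\wedge F_{x_2}^{-1}(m)\big],\quad Z\sim\mu_\mathcal{X}.\] Then there is a constant $0<C<\infty$ depending only on $\mathcal{X}$ such that for all $x_1,z_1,z_2\in\mathcal{X}$, $|\Psi(x_1,z_1)-\Psi(x_1,z_2)|\le C\|z_1-z_2\|$.
   Context: A regular Euclidean metric measure space is a triple $(\mathcal{X},\|\cdot\|,\mu_\mathcal{X})$ with $\mathcal{X}\subset\mathbb{R}^d$ compact, $\|\cdot\|$ the Euclidean norm, and $\mu_\mathcal{X}$ a Borel probability measure with $\mathrm{supp}(\mu_\mathcal{X})=\mathcal{X}$ having a Lipschitz continuous Lebesgue density. For $X\sim\mu_\mathcal{X}$, $F_x(t)=P(\|X-x\|^2\le t)$ and $F_x^{-1}(u)=\inf\{t:F_x(t)\ge u\}$ is its quantile function. *)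

(* Defs.v *)
From HB Require Import structures.
From mathcomp Require Import all_boot all_order all_algebra.
From mathcomp Require Import all_classical all_reals all_analysis.
Set Implicit Arguments. Unset Strict Implicit. Unset Printing Implicit Defensive.
Import Order.TTheory GRing.Theory Num.Theory.
Import numFieldNormedType.Exports.
Local Open Scope classical_set_scope.
Local Open Scope ring_scope.

(* Points of R^d are represented as d.-tuples of reals; d.-tuple R carries the
   library's product (= Borel) sigma-algebra. *)

Definition sqdist (R : realType) (d : nat) (x y : d.-tuple R) : R :=
  \sum_(i < d) (tnth x i - tnth y i) ^+ 2.

Definition eucl_dist (R : realType) (d : nat) (x y : d.-tuple R) : R :=
  Num.sqrt (sqdist x y).

(* the canonical identification of a tuple with a row vector of R^d, used to
   transport the (product = Euclidean) topology of 'rV[R]_d *)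
Definition tuple_to_row (R : realType) (d : nat) (x : d.-tuple R) : 'rV[R]_d :=
  \row_(i < d) tnth x i.

(* Lebesgue integral on R^d of a nonnegative function, as the iterated integral
   of one-dimensional Lebesgue integrals (Tonelli). *)
Fixpoint leb_int (R : realType) (n : nat) : (n.-tuple R -> \bar R) -> \bar R :=
  match n return (n.-tuple R -> \bar R) -> \bar R with
  | 0 => fun f => f [tuple]
  | n'.+1 => fun f =>
      (\int[@lebesgue_measure R]_(x in setT) leb_int (fun t => f (cons_tuple x t)))%E
  end.

Definition msupport (R : realType) (d : nat)
    (mu : probability (d.-tuple R) R) : set (d.-tuple R) :=
  [set x | forall r : R, 0 < r -> (0 < mu [set y | (eucl_dist x y < r)%R])%E].

Definition has_lipschitz_density (R : realType) (d : nat)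
    (mu : probability (d.-tuple R) R) : Prop :=
  exists f : d.-tuple R -> R,
    measurable_fun setT f /\
    (forall y, 0 <= f y) /\
    (exists L : R, forall x y, `|f x - f y| <= L * eucl_dist x y) /\
    (forall A : set (d.-tuple R), measurable A ->
       mu A = leb_int (fun y => (f y)%:E * (\1_A y)%:E)%E).

Definition regular_euclidean_mms (R : realType) (d : nat)
    (X : set (d.-tuple R)) (mu : probability (d.-tuple R) R) : Prop :=
  compact (@tuple_to_row R d @` X) /\
  msupport mu = X /\
  has_lipschitz_density mu.

Definition cdf_sqdist (R : realType) (d : nat)
    (mu : probability (d.-tuple R) R) (x : d.-tuple R) (t : R) : R :=
  fine (mu [set z | sqdist z x <= t]).

Definition qtl_sqdist (R : realType) (d : nat)
    (mu : probability (d.-tuple R) R) (x : d.-tuple R) (u : R) : R :=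
  inf [set t : R | u <= cdf_sqdist mu x t].

Definition Psi (R : realType) (d : nat)
    (mu : probability (d.-tuple R) R) (m : R) (x1 x2 : d.-tuple R) : R :=
  Order.min (sqdist x1 x2) (qtl_sqdist mu x2 m)
  - fine (\int[mu]_z (Order.min (sqdist z x2) (qtl_sqdist mu x2 m))%:E)%E.

(* Main.v *)
Require Import Defs.
From HB Require Import structures.
From mathcomp Require Import all_boot all_order all_algebra.
From mathcomp Require Import all_classical all_reals all_analysis.
From mathcomp Require Import ring lra.
Import Order.TTheory GRing.Theory Num.Theory.
Import numFieldNormedType.Exports.
Local Open Scope classical_set_scope.
Local Open Scope ring_scope.


Lemma sqdist_ge0 {R : realType} {d : nat} (x y : d.-tuple R) : 0 <= sqdist x y.
Proof. by apply: sumr_ge0 => i _; exact: sqr_ge0. Qed.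

Lemma sqdistC {R : realType} {d : nat} (x y : d.-tuple R) : sqdist x y = sqdist y x.
Proof. by apply: eq_bigr => i _; rewrite -sqrrN opprB. Qed.

Lemma distC {R : realType} {d : nat} (x y : d.-tuple R) : eucl_dist x y = eucl_dist y x.
Proof. by rewrite /eucl_dist sqdistC. Qed.

Lemma dist_ge0 {R : realType} {d : nat} (x y : d.-tuple R) : 0 <= eucl_dist x y.
Proof. exact: sqrtr_ge0. Qed.

Lemma sqdistE {R : realType} {d : nat} (x y : d.-tuple R) : sqdist x y = eucl_dist x y ^+ 2.
Proof. by rewrite /eucl_dist sqr_sqrtr // sqdist_ge0. Qed.

Lemma CS {R : realType} {n : nat} (a b : 'I_n -> R) :
  (\sum_i a i * b i) ^+ 2 <= (\sum_i a i ^+ 2) * (\sum_i b i ^+ 2).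
Proof.
set A := \sum_i a i ^+ 2; set B := \sum_i b i ^+ 2; set P := \sum_i a i * b i.
have A0 : 0 <= A by apply: sumr_ge0 => i _; exact: sqr_ge0.
have key : 0 <= A * (A * B - P ^+ 2).
  have -> : A * (A * B - P ^+ 2) = \sum_i (A * b i - P * a i) ^+ 2.
    have E : forall i, (A * b i - P * a i) ^+ 2 =
       A ^+ 2 * b i ^+ 2 - (2 * A * P) * (a i * b i) + P ^+ 2 * a i ^+ 2.
      by move=> i; ring.
    under eq_bigr do rewrite E.
    rewrite big_split /= sumrB -!mulr_sumr -/A -/B -/P; ring.
  by apply: sumr_ge0 => i _; exact: sqr_ge0.
have [A00|Apos] := eqVneq A 0.
  have ai0 : forall i, a i = 0.
    move=> i; apply/eqP; rewrite -sqrf_eq0; apply/eqP.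
    move/eqP: A00; rewrite psumr_eq0; last by move=> j _; exact: sqr_ge0.
    by move/allP => /(_ i (mem_index_enum _)) /= /eqP.
  rewrite /P big1 ?expr0n //= ?A00 ?mul0r //.
  by move=> i _; rewrite ai0 mul0r.
have Ap : 0 < A by rewrite lt0r Apos.
rewrite -subr_ge0; move: key; rewrite pmulr_rge0 //.
Qed.

Lemma dist_triangle {R : realType} {d : nat} (x y z : d.-tuple R) :
  eucl_dist x z <= eucl_dist x y + eucl_dist y z.
Proof.
set a := fun i => tnth x i - tnth y i; set b := fun i => tnth y i - tnth z i.
have Hxz : sqdist x z = \sum_i (a i + b i) ^+ 2.
  by apply: eq_bigr => i _; rewrite /a /b; congr (_ ^+ 2); ring.
have E : \sum_i (a i + b i) ^+ 2 = sqdist x y + 2 * \sum_i a i * b i + sqdist y z.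
  have E1 : forall i, (a i + b i) ^+ 2 = a i ^+ 2 + 2 * (a i * b i) + b i ^+ 2.
    by move=> i; ring.
  under eq_bigr do rewrite E1.
  by rewrite !big_split /= -mulr_sumr.
have hc := @CS R d a b.
rewrite -[X in X <= _]ger0_norm ?dist_ge0 // -[X in _ <= X]ger0_norm ?addr_ge0 ?dist_ge0 //.
rewrite -ler_sqr ?nnegrE ?normr_ge0 //.
rewrite !ger0_norm ?addr_ge0 ?dist_ge0 // -sqdistE Hxz E !sqdistE.
set u := eucl_dist x y; set v := eucl_dist y z; set P := \sum_i a i * b i.
have : P ^+ 2 <= (u * v) ^+ 2.
  by rewrite exprMn /u /v -!sqdistE; exact: hc.
have u0 : 0 <= u by apply: dist_ge0.
have v0 : 0 <= v by apply: dist_ge0.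
move=> h; have : P <= u * v.
  apply: (le_trans (ler_norm P)); rewrite -ler_sqr ?nnegrE ?normr_ge0 ?mulr_ge0 //.
  by rewrite real_normK ?num_real.
move=> h2; nra.
Qed.

Lemma meas_sqdist {R : realType} {d : nat} (z : d.-tuple R) :
  measurable_fun setT (fun w : d.-tuple R => sqdist w z).
Proof.
rewrite /sqdist; apply: measurable_sum => i.
apply: measurable_realfun.measurable_funM; apply: measurable_realfun.measurable_funB => //; exact: measurable_tnth.
Qed.

Lemma meas_sqdist' {R : realType} {d : nat} (z : d.-tuple R) :
  measurable_fun setT (fun w : d.-tuple R => sqdist z w).
Proof.
under eq_fun do rewrite sqdistC; exact: meas_sqdist.
Qed.

Lemma meas_le {R : realType} {d : nat} (z : d.-tuple R) t :
  measurable [set w : d.-tuple R | sqdist w z <= t].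
Proof.
have := meas_sqdist z measurableT _ (measurable_itv `]-oo, t]).
rewrite setTI; congr measurable; apply/seteqP; split=> w /=;
  by rewrite in_itv /=.
Qed.

Lemma meas_ball {R : realType} {d : nat} (c : d.-tuple R) s :
  measurable [set w : d.-tuple R | eucl_dist c w < s].
Proof.
have [s0|s0] := leP s 0.
  have -> : [set w : d.-tuple R | eucl_dist c w < s] = set0.
    apply/seteqP; split=> w //= h; have := dist_ge0 c w; lra.
  exact: measurable0.
have := meas_sqdist' c measurableT _ (measurable_itv `]-oo, s ^+ 2[).
rewrite setTI; congr measurable; apply/seteqP; split=> w /=;
  rewrite in_itv /= sqdistE ltr_sqr // nnegrE ?dist_ge0 //; exact: ltW.
Qed.

Lemma coord_le_norm {R : realType} {d : nat} (w : d.-tuple R) i :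
  `|tnth w i| <= `|tuple_to_row w|.
Proof.
have -> : tnth w i = tuple_to_row w ord0 i by rewrite /tuple_to_row mxE.
have -> : `|tuple_to_row w| = mx_norm (tuple_to_row w) by [].
rewrite mx_normrE.
exact: (le_bigmax _ (fun ij : 'I_1 * 'I_d => `|tuple_to_row w ij.1 ij.2|) (ord0, i)).
Qed.

Lemma X_bounded {R : realType} {d : nat} (X : set (d.-tuple R)) :
  compact (@tuple_to_row R d @` X) ->
  exists T : R, 0 < T /\ forall w z, X w -> X z -> sqdist w z <= T.
Proof.
move=> hc; have := @compact_bounded R ('rV[R]_d) _ hc.
move=> [M [Mr HM]].
have MM : M < `|M| + 1 by apply: (le_lt_trans (real_ler_norm Mr)); rewrite ltrDl.
have HM' := HM (`|M| + 1) MM.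
set K := `|M| + 1 in HM'.
have K0 : 0 < K by rewrite /K ltr_wpDl.
have cb : forall w i, X w -> `|tnth w i| <= K.
  move=> w i Xw; apply: le_trans (coord_le_norm w i) _.
  by apply: HM'; exists w.
exists ((4 * K ^+ 2) *+ d + 1); split.
  by rewrite ltr_wpDl // mulrn_wge0 // mulr_ge0 // sqr_ge0.
move=> w z Xw Xz.
suff h : sqdist w z <= (4 * K ^+ 2) *+ d by apply: (le_trans h); rewrite lerDl.
rewrite /sqdist.
have -> : (4 * K ^+ 2) *+ d = \sum_(i < d) (4 * K ^+ 2).
  by rewrite sumr_const card_ord.
apply: ler_sum => i _.
have := cb w i Xw; have := cb z i Xz; rewrite !ler_norml => /andP[h1 h2] /andP[h3 h4].
nra.
Qed.


Definition rtup {R : realType} {d : nat} (c : d.-tuple rat) : d.-tuple R :=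
  [tuple ratr (tnth c i) | i < d].

Definition ballq {R : realType} {d : nat} (p : d.-tuple rat * rat) : set (d.-tuple R) :=
  [set w | eucl_dist (rtup p.1) w < ratr p.2].

Lemma approx_tuple {R : realType} {d : nat} (y : d.-tuple R) (r : R) : 0 < r ->
  exists c : d.-tuple rat, eucl_dist (rtup c) y < r.
Proof.
move=> r0.
pose n : R := d%:R.
have n0 : 0 <= n by rewrite /n ler0n.
pose e := r / 2 / (n + 1).
have e0 : 0 < e by rewrite /e !divr_gt0 //; lra.
have en : e * (n + 1) = r / 2 by rewrite /e mulfVK //; apply: lt0r_neq0; lra.
have hq : forall i, exists q : rat, ratr q \in `]tnth y i - e, tnth y i + e[.
  by move=> i; apply: rat_in_itvoo; lra.
exists [tuple projT1 (cid (hq i)) | i < d].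
have hs : sqdist (rtup [tuple projT1 (cid (hq i)) | i < d]) y <= e ^+ 2 *+ d.
  have -> : e ^+ 2 *+ d = \sum_(i < d) e ^+ 2 by rewrite sumr_const card_ord.
  rewrite /sqdist; apply: ler_sum => i _.
  rewrite /rtup !tnth_mktuple.
  have := projT2 (cid (hq i)); rewrite in_itv /= => /andP[h1 h2].
  nra.
have hr : e ^+ 2 *+ d < (r / 2) ^+ 2.
  rewrite -en -mulr_natl -/n; nra.
rewrite -(ltr_sqr (dist_ge0 _ _)) ?nnegrE -?sqdistE; last lra.
suff : r / 2 < r by move=> h; apply: (le_lt_trans hs); apply: (lt_trans hr); nra.
lra.
Qed.

Lemma null_cover {R : realType} {d : nat} (X : set (d.-tuple R))
  (mu : probability (d.-tuple R) R) (y : d.-tuple R) :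
  msupport mu = X -> ~ X y ->
  exists p : d.-tuple rat * rat, mu (ballq p) = 0%E /\ ballq p y.
Proof.
move=> hs nXy.
have [r [r0 hr]] : exists r : R, 0 < r /\
    ~ (0 < mu [set w | (eucl_dist y w < r)%R])%E.
  apply: contrapT => H; apply: nXy; rewrite -hs => r r0.
  apply: contrapT => h; apply: H; exists r; split => //.
have mr : mu [set w | eucl_dist y w < r] = 0%E.
  apply/eqP; rewrite eq_le measure_ge0 andbT leNgt; exact/negP.
have [c hc] : exists c : d.-tuple rat, eucl_dist (rtup c) y < r / 2 by apply: approx_tuple; lra.
have [s hs'] := rat_in_itvoo hc.
move: hs'; rewrite in_itv /= => /andP[s1 s2].
exists (c, s); split; last by rewrite /ballq /= .
apply/eqP; rewrite eq_le measure_ge0 andbT -mr.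
apply: le_measure; rewrite ?inE; [exact: meas_ball | exact: meas_ball |].
move=> w; rewrite /ballq /= => hw.
apply: (le_lt_trans (dist_triangle y (rtup c) w)).
rewrite distC; lra.
Qed.

Lemma mass_one {R : realType} {d : nat} (X : set (d.-tuple R))
  (mu : probability (d.-tuple R) R) (z : d.-tuple R) (T : R) :
  msupport mu = X -> (forall w, X w -> sqdist w z <= T) ->
  mu [set w | sqdist w z <= T] = 1%E.
Proof.
move=> hs hT.
set A := [set w | sqdist w z <= T].
have mA : measurable A by exact: meas_le.
pose F (n : nat) : set (d.-tuple R) :=
  match unpickle n with
  | Some p => if pselect (mu (ballq p) = 0%E) then ballq p else set0
  | None => set0
  end.
have mF : forall n, measurable (F n).
  move=> n; rewrite /F; case: (unpickle n) => [p|]; last exact: measurable0.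
  case: pselect => hh; [exact: meas_ball | exact: measurable0].
have F0 : forall n, mu (F n) = 0%E.
  move=> n; rewrite /F; case: (unpickle n) => [p|]; last exact: measure0.
  by case: pselect => // hh; exact: measure0.
have cov : ~` A `<=` \bigcup_(n in ~` `I_0) F n.
  move=> y /= nA.
  have nXy : ~ X y by move=> Xy; apply: nA; exact: hT.
  have [p [p0 py]] := null_cover _ _ _ hs nXy.
  exists (pickle p); first by [].
  by rewrite /F pickleK; case: pselect.
have mC : mu (~` A) = 0%E.
  apply/eqP; rewrite eq_le measure_ge0 andbT.
  have := measure_sigma_subadditive_tail mu mF (measurableC mA) cov.
  by rewrite eseries0 // => n _ _; exact: F0.
have := probability_setC mu mA; rewrite mC.
have := probability_le1 mu mA; have := measure_ge0 mu A.
case: (mu A) => [r| |] //= _ _ /eqP.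
by rewrite eq_sym -EFinB eqe subr_eq0 => /eqP <-.
Qed.

Lemma mu_fin {R : realType} {d : nat} (mu : probability (d.-tuple R) R) A :
  measurable A -> mu A \is a fin_num.
Proof.
move=> mA; rewrite ge0_fin_numE ?measure_ge0 //.
by apply: (le_lt_trans (probability_le1 mu mA)); rewrite ltry.
Qed.

Lemma cdf_le {R : realType} {d : nat} (mu : probability (d.-tuple R) R)
  (z1 z2 : d.-tuple R) t t' :
  [set w | sqdist w z1 <= t] `<=` [set w | sqdist w z2 <= t'] ->
  cdf_sqdist mu z1 t <= cdf_sqdist mu z2 t'.
Proof.
move=> sub; rewrite /cdf_sqdist.
apply: fine_le; [exact: mu_fin (meas_le _ _) | exact: mu_fin (meas_le _ _) |].
exact: le_measure (mem_set (meas_le z1 t)) (mem_set (meas_le z2 t')) sub.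
Qed.

Lemma S_ge0 {R : realType} {d : nat} (mu : probability (d.-tuple R) R)
  (z : d.-tuple R) m t : 0 < m -> m <= cdf_sqdist mu z t -> 0 <= t.
Proof.
move=> m0 h; rewrite leNgt; apply/negP => t0.
have : [set w | sqdist w z <= t] = set0.
  apply/seteqP; split => w //= hw; have := sqdist_ge0 w z; lra.
move: h; rewrite /cdf_sqdist => + E; rewrite E measure0 /=; lra.
Qed.

Lemma Q_ge0 {R : realType} {d : nat} (mu : probability (d.-tuple R) R)
  (z : d.-tuple R) m T : 0 < m -> m <= cdf_sqdist mu z T ->
  0 <= qtl_sqdist mu z m /\ qtl_sqdist mu z m <= T.
Proof.
move=> m0 hT; rewrite /qtl_sqdist; split.
  apply: lb_le_inf; first by exists T.
  by move=> t /= ht; exact: (S_ge0 _ _ _ _ m0 ht).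
have hl : has_lbound [set t | m <= cdf_sqdist mu z t].
  by exists 0 => t /= ht; exact: (S_ge0 _ _ _ _ m0 ht).
exact: (ge_inf hl).
Qed.

Lemma rho_lip {R : realType} {d : nat} (mu : probability (d.-tuple R) R)
  (z1 z2 : d.-tuple R) m T1 T2 : 0 < m -> m <= cdf_sqdist mu z1 T1 ->
  m <= cdf_sqdist mu z2 T2 ->
  Num.sqrt (qtl_sqdist mu z2 m) <= Num.sqrt (qtl_sqdist mu z1 m) + eucl_dist z1 z2.
Proof.
move=> m0 h1 h2.
set dl := eucl_dist z1 z2.
have dl0 : 0 <= dl by apply: dist_ge0.
set a := Num.sqrt (qtl_sqdist mu z2 m) - dl.
have [a0|a0] := leP a 0.
  have := sqrtr_ge0 (qtl_sqdist mu z1 m); rewrite /a in a0; lra.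
have hl2 : has_lbound [set t | m <= cdf_sqdist mu z2 t].
  by exists 0 => t /= ht; exact: (S_ge0 _ _ _ _ m0 ht).
have key : a ^+ 2 <= qtl_sqdist mu z1 m.
  rewrite /qtl_sqdist; apply: lb_le_inf; first by exists T1.
  move=> t /= ht.
  have t0 : 0 <= t := S_ge0 _ _ _ _ m0 ht.
  have hS : m <= cdf_sqdist mu z2 ((Num.sqrt t + dl) ^+ 2).
    apply: (le_trans ht); apply: cdf_le => w /= hw.
    rewrite sqdistE.
    have hw' : eucl_dist w z1 <= Num.sqrt t.
      by rewrite /eucl_dist ler_sqrt.
    have := dist_triangle w z1 z2; rewrite -/dl => htri.
    have := dist_ge0 w z2; have := sqrtr_ge0 t; nra.
  have hQ : qtl_sqdist mu z2 m <= (Num.sqrt t + dl) ^+ 2 := ge_inf hl2 hS.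
  have : Num.sqrt (qtl_sqdist mu z2 m) <= Num.sqrt t + dl.
    have := ler_wsqrtr hQ; rewrite sqrtr_sqr ger0_norm //.
    by apply: addr_ge0 => //; exact: sqrtr_ge0.
  rewrite -/a => ha.
  have ta : a <= Num.sqrt t by rewrite /a; lra.
  have : a ^+ 2 <= Num.sqrt t ^+ 2.
    by rewrite ler_sqr ?nnegrE ?sqrtr_ge0 //; apply: ltW.
  by rewrite sqr_sqrtr.
have := ler_wsqrtr key; rewrite sqrtr_sqr ger0_norm; last lra.
rewrite /a; lra.
Qed.

Lemma int_fin {R : realType} {d : nat} (mu : probability (d.-tuple R) R)
  (f : d.-tuple R -> R) B : measurable_fun setT f ->
  (forall x, 0 <= f x) -> (forall x, f x <= B) ->
  (\int[mu]_x (f x)%:E)%E \is a fin_num.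
Proof.
move=> mf f0 fB; rewrite ge0_fin_numE; last by apply: integral_ge0 => x _; rewrite lee_fin.
apply: (@le_lt_trans _ _ (\int[mu]_x (cst B%:E) x)%E).
  apply: ge0_le_integral => //.
  - by move=> x _; rewrite lee_fin.
  - exact/measurable_realfun.measurable_EFinP.
  - by move=> x _; rewrite lee_fin.
rewrite integral_cst //; set M := (X in (_ * X)%E).
have -> : M = 1%E by rewrite /M; exact: probability_setT.
by rewrite mule1 ltry.
Qed.

Lemma int_cmp {R : realType} {d : nat} (mu : probability (d.-tuple R) R)
  (f g : d.-tuple R -> R) B c : measurable_fun setT f -> measurable_fun setT g ->
  (forall x, 0 <= f x) -> (forall x, 0 <= g x) -> (forall x, f x <= B) ->
  (forall x, g x <= B) -> 0 <= c -> (forall x, f x <= g x + c) ->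
  fine (\int[mu]_x (f x)%:E)%E <= fine (\int[mu]_x (g x)%:E)%E + c.
Proof.
move=> mf mg f0 g0 fB gB c0 fgc.
have ff := int_fin mu _ _ mf f0 fB; have fg := int_fin mu _ _ mg g0 gB.
rewrite -lee_fin EFinD !fineK //.
apply: (@le_trans _ _ (\int[mu]_x ((g x)%:E + (cst c%:E) x))%E).
  apply: ge0_le_integral => //.
  - by move=> x _; rewrite lee_fin.
  - exact/measurable_realfun.measurable_EFinP.
  - apply: emeasurable_funD => //; exact/measurable_realfun.measurable_EFinP.
  - by move=> x _; rewrite /= -EFinD lee_fin.
rewrite ge0_integralD //; last first.
  - exact/measurable_realfun.measurable_EFinP.
  - by move=> x _; rewrite lee_fin.
rewrite integral_cst //; set M := (X in (_ * X)%E).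
have -> : M = 1%E by rewrite /M; exact: probability_setT.
by rewrite mule1.
Qed.

Lemma min_sq {R : realType} (u r : R) : 0 <= u -> 0 <= r ->
  Order.min (u ^+ 2) (r ^+ 2) = Order.min u r ^+ 2.
Proof.
move=> u0 r0; case: (leP u r) => h.
  by rewrite min_l // ler_sqr.
by rewrite min_r // ?ler_sqr ?nnegrE //; apply: ltW.
Qed.

Lemma min_lip {R : realType} (u1 u2 r1 r2 dl : R) :
  `|u1 - u2| <= dl -> `|r1 - r2| <= dl ->
  `|Order.min u1 r1 - Order.min u2 r2| <= dl.
Proof.
rewrite !ler_norml => /andP[h1 h2] /andP[h3 h4].
case: (leP u1 r1) => a; case: (leP u2 r2) => b;
  rewrite ?min_l ?min_r ?(ltW a) ?(ltW b) //; apply/andP; split; lra.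
Qed.

Lemma min_sq_lip {R : realType} (u1 u2 r1 r2 K dl : R) :
  0 <= u1 -> 0 <= u2 -> 0 <= r1 -> r1 <= K -> 0 <= r2 -> r2 <= K ->
  `|u1 - u2| <= dl -> `|r1 - r2| <= dl ->
  `|Order.min (u1 ^+ 2) (r1 ^+ 2) - Order.min (u2 ^+ 2) (r2 ^+ 2)| <= 2 * K * dl.
Proof.
move=> u10 u20 r10 r1K r20 r2K hu hr.
rewrite !min_sq //.
have hg := min_lip _ _ _ _ _ hu hr.
set g1 := Order.min u1 r1 in hg *; set g2 := Order.min u2 r2 in hg *.
have g10 : 0 <= g1 by rewrite /g1 le_min u10 r10.
have g20 : 0 <= g2 by rewrite /g2 le_min u20 r20.
have g1K : g1 <= K by rewrite /g1 ge_min r1K orbT.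
have g2K : g2 <= K by rewrite /g2 ge_min r2K orbT.
move: hg; rewrite !ler_norml => /andP[h1 h2].
apply/andP; split; nra.
Qed.

Theorem lemmaC4 (R : realType) (d : nat) (X : set (d.-tuple R))
    (mu : probability (d.-tuple R) R) :
  regular_euclidean_mms X mu ->
  exists C : R, 0 < C /\
    forall m : R, 0 < m <= 1 ->
    forall x1 z1 z2 : d.-tuple R, X x1 -> X z1 -> X z2 ->
      `|Psi mu m x1 z1 - Psi mu m x1 z2| <= C * eucl_dist z1 z2.
Proof.
move=> [hc [hs _]].
have [Tb [Tb0 hb]] := X_bounded X hc.
set K := Num.sqrt Tb.
have K0 : 0 <= K by apply: sqrtr_ge0.
exists (4 * K + 1); split; first lra.
move=> m /andP[m0 m1] x1 z1 z2 X1 Z1 Z2.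
have cdfT : forall z, X z -> m <= cdf_sqdist mu z Tb.
  move=> z Xz; rewrite /cdf_sqdist.
  by rewrite (mass_one X mu z Tb hs (fun w Xw => hb w z Xw Xz)).
have [Q10 Q1T] := Q_ge0 mu z1 m Tb m0 (cdfT z1 Z1).
have [Q20 Q2T] := Q_ge0 mu z2 m Tb m0 (cdfT z2 Z2).
have r12 := rho_lip mu z1 z2 m Tb Tb m0 (cdfT z1 Z1) (cdfT z2 Z2).
have r21 := rho_lip mu z2 z1 m Tb Tb m0 (cdfT z2 Z2) (cdfT z1 Z1).
rewrite distC in r21.
set Q1 := qtl_sqdist mu z1 m in Q10 Q1T r12 r21 *.
set Q2 := qtl_sqdist mu z2 m in Q20 Q2T r12 r21 *.
set dl := eucl_dist z1 z2 in r12 r21 *.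
have dl0 : 0 <= dl by apply: dist_ge0.
have rK1 : Num.sqrt Q1 <= K by apply: ler_wsqrtr.
have rK2 : Num.sqrt Q2 <= K by apply: ler_wsqrtr.
have pw : forall w, `|Order.min (sqdist w z1) Q1 - Order.min (sqdist w z2) Q2|
    <= 2 * K * dl.
  move=> w; rewrite !sqdistE -(sqr_sqrtr Q10) -(sqr_sqrtr Q20).
  apply: min_sq_lip => //; try exact: dist_ge0; try exact: sqrtr_ge0.
    have := dist_triangle w z1 z2; have := dist_triangle w z2 z1.
    rewrite (distC z2 z1) -/dl => a b; rewrite ler_norml; apply/andP; split; lra.
  rewrite ler_norml; apply/andP; split; lra.
have minB : forall w Q, 0 <= Q -> Q <= Tb ->
    0 <= Order.min (sqdist w z1) Q /\ Order.min (sqdist w z1) Q <= Tb.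
  move=> w Q q0 qT; split; first by rewrite le_min sqdist_ge0.
  by rewrite ge_min qT orbT.
have minB2 : forall w Q, 0 <= Q -> Q <= Tb ->
    0 <= Order.min (sqdist w z2) Q /\ Order.min (sqdist w z2) Q <= Tb.
  move=> w Q q0 qT; split; first by rewrite le_min sqdist_ge0.
  by rewrite ge_min qT orbT.
have mf1 : measurable_fun setT (fun w => Order.min (sqdist w z1) Q1).
  exact: measurable_realfun.measurable_minr (meas_sqdist z1) (measurable_cst _).
have mf2 : measurable_fun setT (fun w => Order.min (sqdist w z2) Q2).
  exact: measurable_realfun.measurable_minr (meas_sqdist z2) (measurable_cst _).
have c0 : 0 <= 2 * K * dl by rewrite !mulr_ge0.
have I12 := int_cmp mu _ _ Tb (2 * K * dl) mf1 mf2
  (fun w => (minB w Q1 Q10 Q1T).1) (fun w => (minB2 w Q2 Q20 Q2T).1)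
  (fun w => (minB w Q1 Q10 Q1T).2) (fun w => (minB2 w Q2 Q20 Q2T).2) c0
  (fun w => let h := pw w in ltac:(move: h; rewrite ler_norml => /andP[_ h]; lra)).
have I21 := int_cmp mu _ _ Tb (2 * K * dl) mf2 mf1
  (fun w => (minB2 w Q2 Q20 Q2T).1) (fun w => (minB w Q1 Q10 Q1T).1)
  (fun w => (minB2 w Q2 Q20 Q2T).2) (fun w => (minB w Q1 Q10 Q1T).2) c0
  (fun w => let h := pw w in ltac:(move: h; rewrite ler_norml => /andP[h _]; lra)).
have px := pw x1.
rewrite /Psi -/Q1 -/Q2.
move: px I12 I21.
set a1 := Order.min (sqdist x1 z1) Q1; set a2 := Order.min (sqdist x1 z2) Q2.
set E1 := fine _; set E2 := fine _.
rewrite !ler_norml => /andP[p1 p2] i12 i21.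
apply/andP; split; nra.
Qed.
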